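(* Let $\mathbf u$ be an infinite word whose language is closed under reversal, and suppose there exists an integer $H$ such that for every factor $f$ of $\mathbf u$ with $|f|\ge H$ the longest palindromic suffix of $f$ occurs exactly once in $f$. Let $w$ be a non-palindromic factor of $\mathbf u$ with $|w|\ge H$ and let $v$ be a palindromic factor of $\mathbf u$ with $|v|\ge H$. Then: (i) the occurrences of $w$ and $\overline w$ in $\mathbf u$ alternate, i.e., every complete return word of $w$ contains $\overline w$ as a factor; (ii) every factor $e$ of $\mathbf u$ which has prefix $w$ and suffix $\overline w$ and contains no other occurrences of $w$ or $\overline w$ is a palindrome; (iii) every complete return word of $v$ is a palindrome.
   Context: For a finite word $w$, $\overline{w}$ denotes its reversal; $w$ is a palindrome if $w=\overline w$. The language of $\mathbf u$ is closed under reversal if $\overline w$ is a factor of $\mathbf u$ whenever $w$ is (this implies every factor occurs infinitely often). A complete return word of a factor $w$ is a factor $q$ of $\mathbf u$ such that $w$ is a prefix and a suffix of $q$ and $w$ occurs in $q$ exactly twice. *)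

(* Defs.v *)
From mathcomp Require Import all_boot.
Set Implicit Arguments. Unset Strict Implicit. Unset Printing Implicit Defensive.

Section Words.
Variable A : eqType.

Definition window (u : nat -> A) (i n : nat) : seq A := mkseq (fun k => u (i + k)) n.

Definition factor (u : nat -> A) (w : seq A) : Prop := exists i, window u i (size w) = w.

Definition palindrome (w : seq A) : bool := rev w == w.

Definition closed_under_reversal (u : nat -> A) : Prop :=
  forall w, factor u w -> factor u (rev w).

Definition occ (p f : seq A) : nat :=
  count (fun i => take (size p) (drop i f) == p) (iota 0 (size f - size p).+1).

Definition longest_pal_suffix (f p : seq A) : Prop :=
  [/\ suffix p f, palindrome p &
      forall q, suffix q f -> palindrome q -> size q <= size p].

Definition complete_return_word (u : nat -> A) (w q : seq A) : Prop :=
  [/\ factor u q, prefix w q, suffix w q & occ w q = 2].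

End Words.

(* Main.v *)
Require Import Defs.
From mathcomp Require Import all_boot.
From mathcomp Require Import zify.
Set Implicit Arguments. Unset Strict Implicit.

Section Aux.
Variable A : eqType.
Implicit Types (x f p q : seq A).

Lemma occ_ge x f (l : seq nat) : uniq l ->
  (forall i, i \in l -> exists a b, f = a ++ x ++ b /\ size a = i) ->
  size l <= occ x f.
Proof.
move=> ul H; rewrite /occ -size_filter; apply: uniq_leq_size => // i il.
have [a [b [-> <-]]] := H i il.
rewrite mem_filter mem_iota drop_size_cat // take_size_cat // eqxx /=.
rewrite !size_cat; lia.
Qed.

Lemma occ_self x : occ x x = 1.
Proof. by rewrite /occ subnn /= drop0 take_size eqxx. Qed.

Lemma suf_split t1 x1 t2 x2 : t1 ++ x1 = t2 ++ x2 -> size x2 <= size x1 ->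
  exists r, x1 = r ++ x2 /\ t2 = t1 ++ r.
Proof.
move=> E le.
have hs : size t1 + size x1 = size t2 + size x2 by rewrite -!size_cat E.
exists (take (size t2 - size t1) x1); split.
  have -> : x2 = drop (size t2 - size t1) x1.
    have -> : x1 = drop (size t1) (t1 ++ x1) by rewrite drop_size_cat.
    by rewrite drop_drop E subnK ?drop_size_cat //; lia.
  by rewrite cat_take_drop.
have: take (size t2) (t1 ++ x1) = t2 by rewrite E take_size_cat.
rewrite take_cat; case: ltnP => h; first lia.
by move=> ->.

Qed.

Lemma pal_rev p : palindrome p -> rev p = p.
Proof. by move/eqP. Qed.

Lemma lps_ex f : exists p, longest_pal_suffix f p.
Proof.
have exP : exists k, palindrome (drop k f) by exists (size f); rewrite drop_size.
case: (ex_minnP exP) => k pk mk; exists (drop k f); split => //.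
  by apply/suffixP; exists (take k f); rewrite cat_take_drop.
move=> q /suffixP [s Ef] pq.
have := mk (size s); rewrite Ef (@drop_size_cat _ (size s) s q) // => /(_ pq).
rewrite size_drop size_cat; lia.
Qed.

Lemma lps_size f p q : longest_pal_suffix f p -> suffix q f -> palindrome q -> size q <= size p.
Proof. by case=> _ _; apply. Qed.

End Aux.

Theorem lemma4p4 (A : eqType) (u : nat -> A) (H : nat) :
  closed_under_reversal u ->
  (forall f, factor u f -> H <= size f ->
     forall p, longest_pal_suffix f p -> occ p f = 1) ->
  (forall w, factor u w -> ~~ palindrome w -> H <= size w ->
     (forall q, complete_return_word u w q -> infix (rev w) q) /\
     (forall e, factor u e -> prefix w e -> suffix (rev w) e ->
        occ w e = 1 -> occ (rev w) e = 1 -> palindrome e)) /\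
  (forall v, factor u v -> palindrome v -> H <= size v ->
     forall q, complete_return_word u v q -> palindrome q).
Proof.
move=> _ Hyp; split.
- move=> w _ _ Hw; split.
  + move=> q [fq /prefixP [s1 E1] /suffixP [s2 E2] o2].
    have [p lp] := lps_ex q.
    have szq : size w < size q.
      have : size w <= size q by rewrite E1 size_cat leq_addr.
      rewrite leq_eqVlt => /orP [/eqP e|//].
      have s10 : s1 = [::] by apply/size0nil; move: e; rewrite E1 size_cat; lia.
      by move: o2; rewrite E1 s10 cats0 occ_self.
    have op := Hyp q fq (leq_trans Hw (ltnW szq)) p lp.
    case: lp => /suffixP [t Et] pp _.
    case: (leqP (size w) (size p)) => hs.
    * have [r [Er _]] := suf_split (etrans (esym Et) E2) hs.
      apply/infixP; exists t, (rev r).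
      by rewrite Et -{1}(pal_rev pp) Er rev_cat.
    * have [r [Er Et2]] := suf_split (etrans (esym E2) Et) (ltnW hs).
      have : 2 <= occ p q.
        apply: (occ_ge (l := [:: size r; size t])).
          rewrite /= andbT inE neq_ltn; apply/orP; left.
          have : size q = size t + size p by rewrite Et size_cat.
          have : size w = size r + size p by rewrite Er size_cat.
          lia.
        move=> i; rewrite !inE => /orP [] /eqP ->.
          by exists r, s1; rewrite E1 Er catA.
        by exists t, [::]; rewrite cats0.
      by rewrite op.
  + move=> e fe /prefixP [s1 E1] /suffixP [s2 E2] o1 _.
    have [p lp] := lps_ex e.
    have hwe : size w <= size e by rewrite E1 size_cat leq_addr.
    have op := Hyp e fe (leq_trans Hw hwe) p lp.
    case: lp => /suffixP [t Et] pp _.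
    case: t Et => [|c t] Et; first by rewrite Et.
    case: (leqP (size w) (size p)) => hs.
    * have [r [Er _]] := suf_split (etrans (esym Et) E2) (leq_trans (eq_leq (size_rev w)) hs).
      have : 2 <= occ w e.
        apply: (occ_ge (l := [:: 0; size (c :: t)])) => // i; rewrite !inE => /orP [] /eqP ->.
          by exists [::], s1.
        exists (c :: t), (rev r); split => //.
        by rewrite Et -{1}(pal_rev pp) Er rev_cat revK.
      by rewrite o1.
    * have [r [Er _]] := suf_split (etrans (esym E2) Et) (leq_trans (ltnW hs) (eq_leq (esym (size_rev w)))).
      have : 2 <= occ p e.
        apply: (occ_ge (l := [:: 0; size (c :: t)])) => // i; rewrite !inE => /orP [] /eqP ->.
          exists [::], (rev r ++ s1); split => //.
          by rewrite E1 -(revK w) Er rev_cat (pal_rev pp) -catA.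
        by exists (c :: t), [::]; rewrite cats0.
      by rewrite op.
- move=> v _ pv Hv q [fq /prefixP [s1 E1] /suffixP [s2 E2] o2].
  have [p lp] := lps_ex q.
  have szq : size v <= size q by rewrite E1 size_cat leq_addr.
  have op := Hyp q fq (leq_trans Hv szq) p lp.
  have hs : size v <= size p by apply: (lps_size lp) => //; apply/suffixP; exists s2.
  case: lp => /suffixP [t Et] pp _.
  case: t Et => [|c t] Et; first by rewrite Et.
  have [r [Er Es2]] := suf_split (etrans (esym Et) E2) hs.
  have s2ne : size s2 != 0.
    apply/negP => /eqP /size0nil s20; move: o2; rewrite E2 s20 /= occ_self //.
  case: (eqVneq (size s2) (size (c :: t))) => e2.
  + have pv' : p = v.
      move: e2; rewrite Es2 size_cat.
      by case: r Er Es2 => [|? ?] Er _; [rewrite Er|rewrite /=; lia].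
    have : 2 <= occ p q.
      apply: (occ_ge (l := [:: 0; size (c :: t)])) => // i; rewrite !inE => /orP [] /eqP ->.
        by exists [::], s1; rewrite pv'.
      by exists (c :: t), [::]; rewrite cats0.
    by rewrite op.
  + have : 3 <= occ v q.
      apply: (occ_ge (l := [:: 0; size (c :: t); size s2])).
        move: s2ne e2; rewrite /= !inE; lia.
      move=> i; rewrite !inE => /orP [/eqP ->|/orP [] /eqP ->].
      * by exists [::], s1.
      * exists (c :: t), (rev r); split => //.
        by rewrite Et -{1}(pal_rev pp) Er rev_cat (pal_rev pv).
      * by exists s2, [::]; rewrite cats0.
    by rewrite o2.
Qed.
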